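(* Let $\mathfrak{C}$ be a chromosome-set. If there exists $K\ge 1$ such that every string of length $K$ is a conductor for $\mathfrak{C}$, then $\mathrm{CPC}(\mathrm{DBG}(\mathfrak{C},K))=\mathfrak{C}$.
   Context: All strings are over a fixed finite alphabet $\Sigma$. A cyclic string is a bi-infinite periodic word $\mathbb{Z}\to\Sigma$, considered up to shifting indices; for a nonempty finite string $x$, $\langle x\rangle$ is the cyclic string repeating $x$ in both directions. A chromosome-set is a set of cyclic strings; a finite string is a substring of it if it is a contiguous block of one of its elements. A finite string $v$ is a conductor for $\mathfrak{C}$ if for all nonempty finite strings $a,b$ such that $va$ and $vb$ both end with $v$, we have $\langle ab\rangle\in\mathfrak{C}$ if and only if $\langle a\rangle\in\mathfrak{C}$ and $\langle b\rangle\in\mathfrak{C}$. $\mathrm{DBG}(\mathfrak{C},K)$ is the de Bruijn graph: its vertices are the strings of length $K$ that are substrings of $\mathfrak{C}$ (labelled by themselves), and for each string $w$ of length $K+1$ that is a substring of $\mathfrak{C}$ there is an edge labelled $w$ from the vertex equal to its length-$K$ prefix to the vertex equal to its length-$K$ suffix. The label of a walk $v_0,e_1,\dots,e_n,v_n$ is $Label(e_1)$ followed, for $i\ge 2$, by $Label(e_i)$ with its first $|Label(v_{i-1})|$ characters removed. A circuit is a primitive closed walk up to rotation; if its walk label is $Label(v_0)x$, its label is $\langle x\rangle$. $\mathrm{CPC}(\mathfrak{G})$ is the set of circuit labels of a graph $\mathfrak{G}$. *)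

(* Defs.v *)
From mathcomp Require Import all_boot all_order all_algebra.
Set Implicit Arguments. Unset Strict Implicit. Unset Printing Implicit Defensive.
Import GRing.Theory Num.Theory.

Section Defs.
Variable Sigma : finType.

Definition bword := int -> Sigma.

Definition periodic (w : bword) : Prop :=
  exists p : nat, (0 < p)%N /\ forall i : int, w (i + p%:Z)%R = w i.

Definition shift_eq (w w' : bword) : Prop :=
  exists k : int, forall i : int, w' i = w (i + k)%R.

(* A chromosome-set (set of cyclic strings) is encoded as a predicate on
   bi-infinite words whose elements are periodic and which is closed under
   shifting (a union of shift classes). *)
Definition chromosome_set (C : bword -> Prop) : Prop :=
  (forall w, C w -> periodic w) /\
  (forall w w', shift_eq w w' -> C w -> C w').

(* [represents x w] : x is nonempty and w is (a shift of) <x> *)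
Definition represents (x : seq Sigma) (w : bword) : Prop :=
  (0 < size x)%N /\
  exists k : int, forall i : int,
    onth x (absz (((i + k)%R %% (size x)%:Z)%Z)) = Some (w i).

Definition cmem (C : bword -> Prop) (x : seq Sigma) : Prop :=
  exists w, C w /\ represents x w.

Definition substr (C : bword -> Prop) (s : seq Sigma) : Prop :=
  exists w, C w /\ exists i : int,
    forall j : nat, (j < size s)%N -> onth s j = Some (w (i + j%:Z)%R).

Definition conductor (C : bword -> Prop) (v : seq Sigma) : Prop :=
  forall a b : seq Sigma, (0 < size a)%N -> (0 < size b)%N ->
    suffix v (v ++ a) -> suffix v (v ++ b) ->
    (cmem C (a ++ b) <-> cmem C a /\ cmem C b).

(* labelled directed multigraphs: vertices/edges are the elements of types
   gV/gE satisfying isV/isE *)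
Record lgraph := LGraph {
  gV : Type; gE : Type;
  isV : gV -> Prop; isE : gE -> Prop;
  src : gE -> gV; tgt : gE -> gV;
  vlab : gV -> seq Sigma; elab : gE -> seq Sigma }.

Fixpoint walk_from (G : lgraph) (v : gV G) (es : seq (gE G)) : Prop :=
  match es with
  | [::] => True
  | e :: es' => isE e /\ src e = v /\ isV (tgt e) /\ walk_from (tgt e) es'
  end.

Definition walk (G : lgraph) (v0 : gV G) (es : seq (gE G)) : Prop :=
  isV v0 /\ walk_from v0 es.

Definition walk_label (G : lgraph) (v0 : gV G) (es : seq (gE G)) : seq Sigma :=
  match es with
  | [::] => vlab v0
  | e :: es' => elab e ++
      flatten [seq drop (size (vlab (src e'))) (elab e') | e' <- es']
  end.

Definition closed_walk (G : lgraph) (v0 : gV G) (es : seq (gE G)) : Prop :=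
  walk v0 es /\ (0 < size es)%N /\ last v0 (map (@tgt G) es) = v0.

Definition primitive_walk (G : lgraph) (es : seq (gE G)) : Prop :=
  ~ exists (es' : seq (gE G)) (k : nat), (1 < k)%N /\ es = flatten (nseq k es').

(* CPC(G): circuit labels, as a (shift-closed) predicate on bi-infinite words *)
Definition CPC (G : lgraph) (w : bword) : Prop :=
  exists (v0 : gV G) (es : seq (gE G)) (x : seq Sigma),
    closed_walk v0 es /\ primitive_walk es /\
    walk_label v0 es = vlab v0 ++ x /\ represents x w.

Definition DBG (C : bword -> Prop) (K : nat) : lgraph :=
  {| gV := seq Sigma; gE := seq Sigma;
     isV := fun s => size s = K /\ substr C s;
     isE := fun w => size w = K.+1 /\ substr C w;
     src := fun w => take K w; tgt := fun w => drop 1 w;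
     vlab := id; elab := id |}.

End Defs.

(* Main.v *)
Require Import Defs.
From mathcomp Require Import all_boot all_order all_algebra.
From mathcomp Require Import zify ring.
From Stdlib Require Import Classical.
Import GRing.Theory Num.Theory.
Set Implicit Arguments. Unset Strict Implicit.

Section S.
Variable Sigma : finType.
Implicit Types (w : bword Sigma) (C : bword Sigma -> Prop) (x : seq Sigma).

Definition per w (n:nat) := forall i : int, w (i + n%:Z)%R = w i.

Lemma per_pos w n : per w n -> forall (m : nat) i, w (i + m%:Z * n%:Z)%R = w i.
Proof.
move=> H; elim=> [|m IH] i; first by rewrite mul0r addr0.
have -> : (i + m.+1%:Z * n%:Z = (i + m%:Z * n%:Z) + n%:Z)%R by lia.
by rewrite H IH.
Qed.

Lemma per_mul w n : per w n -> forall (q : int) i, w (i + q * n%:Z)%R = w i.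
Proof.
move=> H [m|m] i; first exact: per_pos.
rewrite -(per_pos H m.+1 (i + Negz m * n%:Z)%R).
congr w; lia.
Qed.

Lemma rep_per x w : represents x w -> per w (size x).
Proof.
move=> [n0 [k H]] i.
have := H (i + (size x)%:Z)%R.
rewrite (_ : ((i + (size x)%:Z + k) %% (size x)%:Z = (i+k) %% (size x)%:Z)%Z).
  by rewrite H => -[].
by rewrite addrAC modzDr.
Qed.

Lemma rep_off x w : represents x w -> exists k, forall j, (j < size x)%N -> onth x j = Some (w (k + j%:Z)%R).
Proof.
move=> [n0 [k H]]; exists (-k)%R => j lt.
have := H (-k + j%:Z)%R.
by rewrite addrAC addNr add0r modz_nat modn_small.
Qed.

Lemma rep_mk x w k : (0 < size x)%N -> per w (size x) ->
  (forall j, (j < size x)%N -> onth x j = Some (w (k + j%:Z)%R)) -> represents x w.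
Proof.
move=> n0 P H; split=> //; exists (-k)%R => i.
have nz : ((size x)%:Z != 0)%R by rewrite eqz_nat -lt0n.
have m0 := modz_ge0 (i + - k)%R nz.
have n0' : (0 < (size x)%:Z)%R by rewrite ltz_nat.
have mlt := ltz_pmod (i + - k)%R n0'.
have Hd := divz_eq (i + - k)%R (size x)%:Z.
move: m0 mlt Hd.
case: ((i + - k) %% (size x)%:Z)%Z => [mn|mn] //= _ mlt Hd.
have -> : i = (k + mn%:Z + ((i + - k) %/ (size x)%:Z)%Z * (size x)%:Z)%R by lia.
rewrite per_mul //; apply: H; lia.
Qed.

Lemma rep_uniq x w w' : represents x w -> represents x w' -> shift_eq w' w.
Proof.
move=> [_ [k H]] [_ [k' H']]; exists (k - k')%R => i.
have := H' (i + (k - k'))%R.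
rewrite (_ : (i + (k - k') + k' = i + k)%R); last by lia.
by rewrite H => -[].
Qed.


Lemma onth_nth' (T : Type) (x0 : T) (s : seq T) j : (j < size s)%N -> onth s j = Some (nth x0 s j).
Proof. by elim: s j => [|y s IH] [|j] //= /IH. Qed.

Lemma cmem_rot C a b : cmem C (a ++ b) -> cmem C (b ++ a).
Proof.
move=> [w [Cw R]]; exists w; split=> //.
have P := rep_per R; have [k H] := rep_off R.
have n0 : (0 < size (b ++ a))%N by rewrite size_cat addnC -size_cat; case: R.
apply: (@rep_mk _ _ (k + (size a)%:Z)%R) => //.
  by rewrite size_cat addnC -size_cat.
move=> j; rewrite size_cat onth_cat => lt.
case: ifP => jb.
  have E : onth (a ++ b) (size a + j) = Some (w (k + (size a + j)%N%:Z)%R).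
    by apply: H; rewrite size_cat ltn_add2l.
  rewrite onth_cat ltnNge leq_addr /= addKn in E; rewrite E.
  by congr (Some (w _)); lia.
have E : onth (a ++ b) (j - size b) = Some (w (k + (j - size b)%N%:Z)%R).
  by apply: H; rewrite size_cat; lia.
rewrite onth_cat ifT in E; last by lia.
rewrite E; congr Some; rewrite -(P (k + (j - size b)%N%:Z)%R) size_cat.
congr w; lia.
Qed.

Definition win w (a : int) (n : nat) := mkseq (fun j => w (a + j%:Z)%R) n.
Arguments win : simpl never.

Lemma size_win w a n : size (win w a n) = n.
Proof. by rewrite size_mkseq. Qed.

Lemma onth_win w a n j : (j < n)%N -> onth (win w a n) j = Some (w (a + j%:Z)%R).
Proof. by move=> lt; rewrite (onth_nth' (w a)) ?size_win // nth_mkseq. Qed.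

Lemma win_cat w a m n : win w a (m + n) = win w a m ++ win w (a + m%:Z)%R n.
Proof.
elim: n => [|n IH]; first by rewrite addn0 cats0.
rewrite addnS /win !mkseqS -/(win w a (m + n)) IH rcons_cat; congr (_ ++ rcons _ _).
congr w; lia.
Qed.

Lemma take_win w a m n : take m (win w a (m + n)) = win w a m.
Proof. by rewrite win_cat take_size_cat // size_win. Qed.

Lemma drop_win w a m n : drop m (win w a (m + n)) = win w (a + m%:Z)%R n.
Proof. by rewrite win_cat drop_size_cat // size_win. Qed.

Lemma win_per w p a n : per w p -> win w (a + p%:Z)%R n = win w a n.
Proof. move=> P; apply: eq_mkseq => j; rewrite addrAC; exact: P. Qed.

Lemma substr_win C w a n : C w -> substr C (win w a n).
Proof. move=> Cw; exists w; split=> //; exists a => j; rewrite size_win; exact: onth_win. Qed.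

Definition st (v a : seq Sigma) := drop (size a) (v ++ a).

Lemma size_st v a : size (st v a) = size v.
Proof. by rewrite /st size_drop size_cat addnK. Qed.

Lemma drop_catle (T : Type) n (s1 s2 : seq T) : (n <= size s1)%N -> drop n (s1 ++ s2) = drop n s1 ++ s2.
Proof.
move=> le; rewrite drop_cat; case: ifP => // h.
have e : n = size s1 by apply/eqP; rewrite eqn_leq le leqNgt h.
by rewrite e subnn drop0 drop_size.
Qed.

Lemma st_cat v a b : st v (a ++ b) = st (st v a) b.
Proof.
rewrite /st -drop_catle ?size_cat ?leq_addl // drop_drop catA; congr drop; lia.
Qed.

Lemma suffix_st v a : suffix v (v ++ a) = (st v a == v).
Proof. by rewrite suffixE size_cat addKn. Qed.

Lemma st_nil v : st v [::] = v.
Proof. by rewrite /st cats0 drop0. Qed.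


Lemma loopA C K v c : chromosome_set C -> size v = K -> substr C (v ++ [:: c]) ->
  exists u', cmem C (c :: u') /\ st v (c :: u') = v.
Proof.
move=> [Cper _] sv [w [Cw [i H]]].
have [p [p0 Pp]] := Cper w Cw.
have PP : per w (p * K.+1).
  move=> j; rewrite -(per_pos Pp K.+1 j); congr w; lia.
set P := (p * K.+1)%N.
have P0 : (0 < P)%N by rewrite muln_gt0 p0.
have PK : (K < P)%N by rewrite /P; apply: (leq_trans (ltnSn K)); exact: leq_pmull.
have Hc : c = w (i + K%:Z)%R.
  have hh := ltnn K; have := H K; rewrite size_cat sv /= addn1 ltnSn => /(_ isT).
  by rewrite onth_cat sv hh subnn /= => -[].
have Hu : win w (i + K%:Z)%R P = c :: win w (i + K%:Z + 1)%R P.-1.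
  by rewrite -{1}(prednK P0) -add1n win_cat /win /= addr0 Hc.
exists (win w (i + K%:Z + 1)%R P.-1); split.
  exists w; split=> //; rewrite -Hu.
  apply: (@rep_mk _ _ (i + K%:Z)%R); rewrite size_win //.
  move=> j lt; exact: onth_win.
rewrite -Hu /st size_win drop_cat sv ltnNge ltnW //=.
have -> : P = ((P - K) + K)%N by rewrite subnK // ltnW.
rewrite addnK drop_win.
have -> : (i + K%:Z + (P - K)%N%:Z = i + P%:Z)%R by lia.
rewrite win_per //.
apply: eq_from_onth_le => j; rewrite size_win sv maxnn => lt.
rewrite onth_win //; have := H j; rewrite size_cat sv /= onth_cat sv lt => -> //; lia.
Qed.

Lemma window K v0 x j c0 : size v0 = K -> (0 < K)%N -> (j < size x)%N ->
  take K.+1 (drop j (v0 ++ x)) = st v0 (take j x) ++ [:: nth c0 x j].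
Proof.
move=> sv K0 lt.
rewrite -{1}(cat_take_drop j x) catA drop_catle; last first.
  by rewrite size_cat size_takel ?leq_addl // ltnW.
have -> : drop j (v0 ++ take j x) = st v0 (take j x) by rewrite /st size_takel // ltnW.
rewrite take_cat size_st sv (_ : (K.+1 < K) = false); last by lia.
rewrite subSnn (drop_nth c0 lt) /=.
by rewrite take0.
Qed.

Lemma key C K v0 x : chromosome_set C -> (0 < K)%N ->
  (forall v : seq Sigma, size v = K -> conductor C v) ->
  size v0 = K -> (0 < size x)%N -> st v0 x = v0 ->
  (forall j, (j < size x)%N -> substr C (take K.+1 (drop j (v0 ++ x)))) ->
  cmem C x.
Proof.
move=> chC K0 cond sv x0 stx win.
have [c0 _] : exists c : Sigma, True by move: x0; case: (x) => // c; exists c.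
have Inv : forall j, (j <= size x)%N -> exists r, cmem C (take j x ++ r) /\
    st v0 (take j x ++ r) = v0 /\ (0 < size (take j x ++ r))%N.
  elim=> [_|j IH lt].
    have := win 0%N x0; rewrite (window c0 sv K0 x0) take0 st_nil => /(loopA chC sv).
    by move=> [u' [h1 h2]]; exists (nth c0 x 0 :: u').
  have [r [h1 [h2 h3]]] := IH (ltnW lt).
  set p := take j x in h1 h2 h3 *.
  set c := nth c0 x j.
  have := win j lt; rewrite (window c0 sv K0 lt) -/p -/c.
  move=> /(loopA chC (etrans (size_st _ _) sv)) [u' [u1 u2]].
  set vj := st v0 p in u1 u2.
  have svj : size vj = K by rewrite size_st.
  have e1 : st vj r = v0 by rewrite -st_cat.
  have rp1 : cmem C (r ++ p) by apply: cmem_rot.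
  have rp2 : st vj (r ++ p) = vj by rewrite st_cat e1.
  have s1 : (0 < size (r ++ p))%N by rewrite size_cat addnC -size_cat.
  have s2 : suffix vj (vj ++ c :: u') by rewrite suffix_st u2.
  have s3 : suffix vj (vj ++ (r ++ p)) by rewrite suffix_st rp2.
  have hc := (cond vj svj (c :: u') (r ++ p) isT s1 s2 s3).2 (conj u1 rp1).
  have hc2 : cmem C (p ++ ((c :: u') ++ r)) by apply: cmem_rot; rewrite -catA.
  exists (u' ++ r); rewrite (take_nth c0 lt) -cats1 -/p -/c -catA /=.
  split; first exact: hc2.
  split; last by rewrite size_cat /= addnS.
  by rewrite st_cat -/vj -cat_cons st_cat u2 e1.
have [r [h1 [h2 _]]] := Inv _ (leqnn _).
rewrite take_size in h1 h2.
case: r h1 h2 => [|b r] h1 h2; first by rewrite cats0 in h1.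
have s2 : suffix v0 (v0 ++ x) by rewrite suffix_st stx.
have s3 : suffix v0 (v0 ++ b :: r).
  by rewrite suffix_st; rewrite st_cat stx in h2; rewrite h2.
exact: ((cond v0 sv x (b :: r) x0 isT s2 s3).1 h1).1.
Qed.


Lemma walk_sizes C K v es : walk_from (G:=DBG C K) v es -> forall e, e \in es -> size e = K.+1.
Proof.
elim: es v => [|e es IH] v //= [[se _] [_ [_ hw]]] e'.
by rewrite in_cons => /orP [/eqP -> //| /(IH _ hw)].
Qed.

Lemma walkW C K v es : size v = K -> walk_from (G:=DBG C K) v es ->
  size (flatten [seq drop K e | e <- es]) = size es /\
  (forall j, (j < size es)%N ->
     substr C (take K.+1 (drop j (v ++ flatten [seq drop K e | e <- es])))) /\
  st v (flatten [seq drop K e | e <- es]) = last v [seq drop 1 e | e <- es].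
Proof.
elim: es v => [|e es IH] v sv /=.
  by move=> _; split=> //; split=> //; rewrite st_nil.
move=> [[se sub] [hsrc [[stg _] hw]]].
have [IH1 [IH2 IH3]] := IH _ stg hw.
move: IH1 IH2 IH3; set F := flatten _ => IH1 IH2 IH3.
have sd : size (drop K e) = 1%N by rewrite size_drop se subSnn.
have E : v ++ (drop K e ++ F) = take 1 e ++ (drop 1 e ++ F).
  by rewrite catA -hsrc cat_take_drop catA cat_take_drop.
have s1 : size (take 1 e) = 1%N by rewrite size_takel // se.
split; first by rewrite size_cat sd IH1.
split.
  move=> [|j] lt.
    by rewrite drop0 catA -hsrc cat_take_drop take_size_cat.
  rewrite E drop_cat s1 (_ : (j.+1 < 1) = false) // subn1 /=.
  exact: IH2.
rewrite /st size_cat sd E drop_cat s1 (_ : (1 + size F < 1) = false); last by lia.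
by rewrite add1n subn1 /=.
Qed.


Lemma dir1 C K w : chromosome_set C -> (0 < K)%N ->
  (forall v : seq Sigma, size v = K -> conductor C v) -> CPC (DBG C K) w -> C w.
Proof.
move=> chC K0 cond [v0 [es [x [[[[sv0 _] hw] [es0 hlast]] [_ [hlab R]]]]]].
have [W1 [W2 W3]] := walkW sv0 hw.
have hx : x = flatten [seq drop K e | e <- es].
  case: es es0 hw hlab hlast W1 W2 W3 => // e es' _ hw hlab _ _ _ _.
  have sz := walk_sizes hw.
  move: hw => /= [[se _] [hsrc _]].
  simpl in hlab.
  rewrite -(drop_size_cat x (erefl (size v0))) -hlab -hsrc.
  rewrite size_takel ?se // drop_catle ?size_drop ?se //.
  congr (_ ++ flatten _); apply/eq_in_map => e' he'.
  by rewrite size_takel // sz // in_cons he' orbT.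
have sx : size x = size es by rewrite hx W1.
have K1 : cmem C x.
  apply: (key chC K0 cond sv0) => //.
  - by case: R.
  - by rewrite hx W3; exact: hlast.
  - by move=> j; rewrite sx hx; exact: W2.
have [w' [Cw' R']] := K1.
exact: (chC.2 _ _ (rep_uniq R R') Cw').
Qed.


Lemma minper w p : (0 < p)%N -> per w p ->
  exists p', (0 < p')%N /\ per w p' /\ forall q, (0 < q)%N -> (q < p')%N -> ~ per w q.
Proof.
elim/ltn_ind: p => p IH p0 Pp.
case: (classic (exists q, (0 < q)%N /\ (q < p)%N /\ per w q)) => [[q [q0 [qp Pq]]]|H].
  exact: IH q qp q0 Pq.
exists p; split=> //; split=> // q q0 qp Pq; apply: H; exists q; done.
Qed.

Fixpoint ews w K (a : int) (m : nat) : seq (seq Sigma) :=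
  if m is m'.+1 then win w a K.+1 :: ews w K (a + 1)%R m' else [::].

Lemma drop1win w a K : drop 1 (win w a K.+1) = win w (a + 1)%R K.
Proof. by rewrite -add1n drop_win. Qed.

Lemma walk_from_cons C K v e es : walk_from (G:=DBG C K) v (e :: es) <->
  ((size e = K.+1 /\ substr C e) /\ take K e = v /\
   (size (drop 1 e) = K /\ substr C (drop 1 e)) /\ walk_from (G:=DBG C K) (drop 1 e) es).
Proof. by []. Qed.

Lemma walk_ews C K w : C w -> forall m a, walk_from (G:=DBG C K) (win w a K) (ews w K a m).
Proof.
move=> Cw; elim=> [|m IH] a //; apply/walk_from_cons.
rewrite drop1win; split; first by split; [rewrite size_win | exact: substr_win].
split; first by rewrite -addn1 take_win.
split; first by split; [rewrite size_win | exact: substr_win].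
exact: IH.
Qed.

Lemma last_ews w K m a : last (win w a K) [seq drop 1 e | e <- ews w K a m] = win w (a + m%:Z)%R K.
Proof.
elim: m a => [|m IH] a; first by rewrite addr0.
change (last (drop 1 (win w a K.+1)) [seq drop 1 e | e <- ews w K (a + 1)%R m] = win w (a + m.+1%:Z)%R K).
rewrite drop1win IH; congr win; lia.
Qed.

Lemma flat_ews w K m a :
  flatten [seq drop (size (take K e)) e | e <- ews w K a m] = win w (a + K%:Z)%R m.
Proof.
elim: m a => [|m IH] a //.
change (drop (size (take K (win w a K.+1))) (win w a K.+1) ++
  flatten [seq drop (size (take K e)) e | e <- ews w K (a + 1)%R m] = win w (a + K%:Z)%R m.+1).
rewrite size_takel ?size_win // -addn1 drop_win IH.
rewrite (_ : (a + 1 + K%:Z = a + K%:Z + 1%:Z)%R); last by lia.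
by rewrite -win_cat add1n.
Qed.

Lemma size_ews w K m a : size (ews w K a m) = m.
Proof. by elim: m a => [|m IH] a //; rewrite /= IH. Qed.

Lemma nth_ews w K m a j : (j < m)%N -> nth [::] (ews w K a m) j = win w (a + j%:Z)%R K.+1.
Proof.
elim: m a j => [|m IH] a [|j] // lt; first by rewrite addr0.
change (nth [::] (ews w K (a + 1)%R m) j = win w (a + j.+1%:Z)%R K.+1).
rewrite IH //; congr win; lia.
Qed.

Lemma size_flat_nseq (T : Type) (s : seq T) k : size (flatten (nseq k s)) = (k * size s)%N.
Proof. by elim: k => [|k IH] //=; rewrite size_cat IH mulSn. Qed.

Lemma nth_flat_nseq (T : Type) (d : T) s k j : (j < k * size s)%N ->
  nth d (flatten (nseq k s)) j = nth d s (j %% size s).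
Proof.
elim: k j => [|k IH] j //= lt.
rewrite nth_cat; case: ifP => h; first by rewrite modn_small.
rewrite IH; last by rewrite mulSn in lt; lia.
have hj : (size s <= j)%N by rewrite leqNgt h.
by rewrite -{2}(subnK hj) modnDr.
Qed.


Lemma per_from w p q : (0 < p)%N -> per w p ->
  (forall r, (r < p)%N -> w (r%:Z + q%:Z)%R = w (r%:Z)%R) -> per w q.
Proof.
move=> p0 Pp H i.
have nz : (p%:Z != 0)%R by rewrite eqz_nat -lt0n.
have m0 := modz_ge0 i nz.
have p0' : (0 < p%:Z)%R by rewrite ltz_nat.
have mlt := ltz_pmod i p0'.
have Hd := divz_eq i p%:Z.
move: m0 mlt Hd; case: (i %% p%:Z)%Z => [mn|mn] //= _ mlt Hd.
have -> : i = (mn%:Z + (i %/ p%:Z)%Z * p%:Z)%R by lia.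
rewrite addrAC per_mul // per_mul //; apply: H; lia.
Qed.

Lemma dir2 C K w : chromosome_set C -> C w -> CPC (DBG C K) w.
Proof.
move=> [Cper _] Cw.
have [p0' [p00 Pp0]] := Cper w Cw.
have [p [p0 [Pp minp]]] := minper p00 Pp0.
set a := (- K%:Z)%R.
exists (win w a K), (ews w K a p), (win w 0 p).
split.
  split; first split.
  - by split; [rewrite size_win | exact: substr_win].
  - exact: walk_ews.
  split; first by rewrite size_ews.
  change (last (win w a K) [seq drop 1 e | e <- ews w K a p] = win w a K).
  by rewrite last_ews win_per.
split; last split.
- move=> [es' [k [k1 E]]].
  have sp : p = (k * size es')%N by rewrite -(size_ews w K p a) E size_flat_nseq.
  move: sp; set q := size es' => sp.
  have q0 : (0 < q)%N by move: p0; rewrite sp; case: (q) => //; rewrite muln0.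
  have qp : (q < p)%N by rewrite sp -{1}(mul1n q) ltn_mul2r q0 k1.
  apply: (minp q q0 qp).
  have Hw : forall j, (j < p)%N -> w (j%:Z)%R = nth (w 0%R) (nth [::] (ews w K a p) j) K.
    move=> j lt; rewrite nth_ews // /win nth_mkseq //; congr w; rewrite /a; lia.
  have Hmod : forall j, (j < p)%N -> w (j%:Z)%R = w ((j %% q)%N%:Z)%R.
    move=> j lt.
    have l1 : (j %% q < p)%N by apply: (leq_trans (ltn_pmod _ q0)); exact: ltnW.
    have l2 : (j < k * q)%N by rewrite -sp.
    have l3 : (j %% q < k * q)%N by rewrite -sp.
    by rewrite Hw // (Hw (j %% q)%N) // E !nth_flat_nseq -/q ?modn_mod.
  apply: (per_from p0 Pp) => r lt.
  case: (ltnP (r + q) p) => h.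
    by rewrite -PoszD Hmod // modnDr -Hmod.
  have ek : k = (k - 2).+2 by lia.
  move: (k - 2) ek => k' ek.
  have hp : p = (q + k'.+1 * q)%N by rewrite sp ek mulSn.
  move: hp; set t := (k'.+1 * q)%N => hp.
  rewrite (_ : (r%:Z + q%:Z = (r + q - p)%N%:Z + p%:Z)%R); last by lia.
  rewrite Pp Hmod; last by lia.
  have er : r = (t + (r + q - p))%N by lia.
  rewrite [in RHS]er [in RHS]Hmod; last by rewrite -er.
  by rewrite /t modnMDl.
- change (walk_label (G:=DBG C K) (win w a K) (ews w K a p) = win w a K ++ win w 0 p).
  case: p p0 Pp minp => [//|p'] p0 Pp minp.
  change (win w a K.+1 ++ flatten [seq drop (size (take K e)) e | e <- ews w K (a + 1)%R p']
     = win w a K ++ win w 0 p'.+1).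
  rewrite flat_ews (_ : (a + 1 + K%:Z = a + K.+1%:Z)%R); last by lia.
  rewrite -win_cat.
  have e0 : win w 0 p'.+1 = win w (a + K%:Z)%R p'.+1 by rewrite /a addNr.
  by rewrite e0 -win_cat addSnnS.
- apply: (@rep_mk _ _ 0%R); rewrite size_win //.
  by move=> j lt; rewrite onth_win.
Qed.

End S.

Theorem theorem6 (Sigma : finType) (C : bword Sigma -> Prop) (K : nat) :
  chromosome_set C ->
  (1 <= K)%N ->
  (forall v : seq Sigma, size v = K -> conductor C v) ->
  forall w : bword Sigma, CPC (DBG C K) w <-> C w.
Proof.
move=> chC K1 cond w; split; first exact: dir1.
exact: dir2.
Qed.
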